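(* Let $\rho>-1$ and let a BIMS channel have capacity $C\in[0,1]$ and function $F(\rho)$. Then: (i) $F^{\rm bec}(\rho;C)\le F(\rho)\le F^{\rm bsc}(\rho;C)$. (ii) If $-1<\rho<0$, then $C^{\rm bsc}\bigl(F(\rho)\bigr)\le C\le C^{\rm bec}\bigl(F(\rho)\bigr)$. (iii) If $\rho>0$, then $C^{\rm bec}\bigl(F(\rho)\bigr)\le C\le C^{\rm bsc}\bigl(F(\rho)\bigr)$. The extremes in (i)–(iii) are attained by the BEC and the BSC, respectively. Moreover, for every pair $(C,t)$ with $C\in[0,1]$ and $F^{\rm bec}(\rho;C)\le t\le F^{\rm bsc}(\rho;C)$ there exists a BIMS channel with capacity $C$ and $F(\rho)=t$; conversely, if this inequality fails for $(C,t)$, no BIMS channel has capacity $C$ and $F(\rho)=t$.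
   Context: A BIMS (binary-input memoryless symmetric) channel is a memoryless channel with input alphabet $\{x_0,x_1\}$, finite output alphabet $\mathcal Y$ and transition probabilities $P_{Y|X}(y|x)$. It is symmetric in Gallager's sense: the columns of the $2\times|\mathcal Y|$ transition matrix (rows indexed by inputs) can be partitioned into submatrices such that, in each submatrix, every row is a permutation of every other row and every column is a permutation of every other column. Inputs are equiprobable, $P_X(x_0)=P_X(x_1)=\tfrac12$, and all logarithms are base $2$. The capacity $C$ of the channel is the mutual information $I(X;Y)$ under this input distribution. For $\rho>-1$, Gallager's function is defined by $$F(\rho)=\sum_{x}\tfrac12\sum_{y:\,P_{Y|X}(y|x)>0}P_{Y|X}(y|x)\left(\frac{\tfrac12\sum_{x'}P_{Y|X}(y|x')^{1/(1+\rho)}}{P_{Y|X}(y|x)^{1/(1+\rho)}}\right)^{\rho},$$ and $E_0(\rho)=-\log F(\rho)$. Let $h(p)=-p\log p-(1-p)\log(1-p)$ denote the binary entropy function, and let $h^{-1}$ be its inverse on $[0,\tfrac12]$. For $C\in[0,1]$ define $$F^{\rm bec}(\rho;C)=1+(2^{-\rho}-1)C,$$ $$F^{\rm bsc}(\rho;C)=2^{-\rho}\Bigl(\varepsilon^{1/(1+\rho)}+(1-\varepsilon)^{1/(1+\rho)}\Bigr)^{1+\rho},\qquad \varepsilon=h^{-1}(1-C).$$ These are the values of $F(\rho)$ for the binary erasure channel (BEC) and the binary symmetric channel (BSC) of capacity $C$. For $\rho\ne0$, $C^{\rm bec}(\cdot)$ and $C^{\rm bsc}(\cdot)$ denote the inverse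 functions of $C\mapsto F^{\rm bec}(\rho;C)$ and $C\mapsto F^{\rm bsc}(\rho;C)$ on $[0,1]$, respectively. *)

(* Defs.v *)
From Stdlib Require Import Reals Lra List Permutation ClassicalEpsilon.
Import ListNotations.
Open Scope R_scope.

Definition sumR (n : nat) (f : nat -> R) : R :=
  fold_right Rplus 0 (map f (seq 0 n)).

Definition log2 (x : R) : R := ln x / ln 2.

(** Real power with the convention 0^a = 0 (used only for a > 0). *)
Definition rpow (x a : R) : R := if Rle_dec x 0 then 0 else Rpower x a.

(** A channel: inputs x0 = false, x1 = true; outputs 0..n-1; W x y = P(y|x). *)
Definition is_channel (n : nat) (W : bool -> nat -> R) : Prop :=
  (forall x y, 0 <= W x y) /\ (forall x, sumR n (W x) = 1).

(** Gallager symmetry: a partition of the columns (via block labels [part])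
    such that in each submatrix every row is a permutation of every other row,
    and every column is a permutation of every other column. *)
Definition block (n : nat) (part : nat -> nat) (k : nat) : list nat :=
  filter (fun y => Nat.eqb (part y) k) (seq 0 n).

Definition gallager_symmetric (n : nat) (W : bool -> nat -> R) : Prop :=
  exists part : nat -> nat,
    (forall k, Permutation (map (W false) (block n part k))
                           (map (W true) (block n part k))) /\
    (forall y y', (y < n)%nat -> (y' < n)%nat -> part y = part y' ->
       (W false y = W false y' /\ W true y = W true y') \/
       (W false y = W true y' /\ W true y = W false y')).

Definition is_bims (n : nat) (W : bool -> nat -> R) : Prop :=
  is_channel n W /\ gallager_symmetric n W.

Definition avg2 (f : bool -> R) : R := / 2 * f false + / 2 * f true.

(** Capacity = I(X;Y) with equiprobable inputs. *)
Definition capacity (n : nat) (W : bool -> nat -> R) : R :=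
  avg2 (fun x => sumR n (fun y =>
    if Rlt_dec 0 (W x y)
    then W x y * log2 (W x y / avg2 (fun x' => W x' y))
    else 0)).

Definition gallagerF (rho : R) (n : nat) (W : bool -> nat -> R) : R :=
  avg2 (fun x => sumR n (fun y =>
    if Rlt_dec 0 (W x y)
    then W x y *
         Rpower (avg2 (fun x' => rpow (W x' y) (/ (1 + rho)))
                 / Rpower (W x y) (/ (1 + rho))) rho
    else 0)).

Definition E0 (rho : R) (n : nat) (W : bool -> nat -> R) : R :=
  - log2 (gallagerF rho n W).

Definition xlog2 (x : R) : R := if Rle_dec x 0 then 0 else x * log2 x.
Definition hb (p : R) : R := - xlog2 p - xlog2 (1 - p).

Definition hinv (v : R) : R :=
  epsilon (inhabits 0) (fun p => 0 <= p <= / 2 /\ hb p = v).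

Definition Fbec (rho C : R) : R := 1 + (Rpower 2 (- rho) - 1) * C.

Definition Fbsc (rho C : R) : R :=
  let eps := hinv (1 - C) in
  Rpower 2 (- rho) *
  Rpower (rpow eps (/ (1 + rho)) + rpow (1 - eps) (/ (1 + rho))) (1 + rho).

Definition Cbec (rho t : R) : R :=
  epsilon (inhabits 0) (fun c => 0 <= c <= 1 /\ Fbec rho c = t).
Definition Cbsc (rho t : R) : R :=
  epsilon (inhabits 0) (fun c => 0 <= c <= 1 /\ Fbsc rho c = t).

(** BEC with capacity C (erasure probability 1 - C): outputs 0, 1, erasure 2. *)
Definition bec (C : R) (x : bool) (y : nat) : R :=
  match y with
  | 0%nat => if x then 0 else C
  | 1%nat => if x then C else 0
  | 2%nat => 1 - C
  | _ => 0
  end.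

Definition bsc (C : R) (x : bool) (y : nat) : R :=
  let eps := hinv (1 - C) in
  match y with
  | 0%nat => if x then eps else 1 - eps
  | 1%nat => if x then 1 - eps else eps
  | _ => 0
  end.

(* Main.v *)
Require Import Defs.
From Stdlib Require Import Reals Lra ClassicalEpsilon List Lia FunctionalExtensionality Permutation.
From Coquelicot Require Import Coquelicot.
Open Scope R_scope.

Lemma cosh_pos x : 0 < cosh x.
Proof. unfold cosh. pose proof (exp_pos x); pose proof (exp_pos (-x)); lra. Qed.

Lemma exp_neg x : exp (- x) = / exp x.
Proof. apply exp_Ropp. Qed.

Definition Gx rho x := exp ((1+rho) * ln (cosh (/(1+rho) * x))) / cosh x.
Definition cx x := (x * (sinh x / cosh x) - ln (cosh x)) / ln 2.
Definition Ef rho x := exp (rho * ln (cosh (/(1+rho) * x))).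
Definition Rf rho x := Ef rho x * sinh ((/(1+rho) - 1) * x) / x.
Definition dGx rho x := Ef rho x * sinh ((/(1+rho) - 1) * x) / (cosh x * cosh x).
Definition dcx x := x / (cosh x * cosh x * ln 2).

Lemma ln2_pos : 0 < ln 2.
Proof. rewrite <- ln_1. apply ln_increasing; lra. Qed.

Lemma exp_1r rho z : 0 < z -> exp ((1+rho) * ln z) = exp (rho * ln z) * z.
Proof. intro hz. replace ((1+rho) * ln z) with (rho * ln z + ln z) by ring.
  rewrite exp_plus, exp_ln; auto. Qed.

Lemma Gx_derive rho x : -1 < rho -> is_derive (Gx rho) x (dGx rho x).
Proof.
  intros hr. set (s := /(1+rho)).
  assert (hs : s * (1 + rho) = 1) by (unfold s; field; lra).
  pose proof (cosh_pos (s*x)) as h1.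
  pose proof (cosh_pos x) as h2.
  unfold Gx, dGx, Ef. fold s.
  unfold cosh, sinh in *.
  auto_derive.
  { repeat split; try lra. }
  replace ((s - 1) * x) with (s * x + - x) by ring.
  repeat rewrite ?exp_plus, ?exp_neg in *.
  unfold Rdiv in *.
  rewrite exp_1r by lra.
  assert (hX := exp_pos x). assert (hY := exp_pos (s*x)).
  set (X := exp x) in *. set (Y := exp (s*x)) in *.
  set (E := exp (rho * ln ((Y + / Y) * / 2))).
  replace s with (/(1+rho)) by reflexivity.
  field. repeat split; try lra; nra.

Qed.

Lemma cx_derive x : is_derive cx x (dcx x).
Proof.
  pose proof (cosh_pos x) as h2. pose proof ln2_pos.
  unfold cx, dcx. unfold cosh, sinh in *.
  auto_derive. { repeat split; try lra. }
  repeat rewrite ?exp_plus, ?exp_neg in *. unfold Rdiv in *.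
  assert (hX := exp_pos x). set (X := exp x) in *.
  field. repeat split; try lra; nra.
Qed.

Definition dRf rho x :=
  Ef rho x / (x * x * cosh (/(1+rho) * x)) *
  ((/(1+rho) - 1) * x * cosh x - (sinh ((2 * /(1+rho) - 1) * x) - sinh x) / 2).

Lemma Rf_derive rho x : -1 < rho -> x <> 0 -> is_derive (Rf rho) x (dRf rho x).
Proof.
  intros hr hx. set (s := /(1+rho)).
  pose proof (cosh_pos (s*x)) as h1.
  pose proof (cosh_pos x) as h2.
  unfold Rf, dRf, Ef. fold s.
  unfold cosh, sinh in *.
  auto_derive.
  { repeat split; try lra. }
  replace ((s - 1) * x) with (s * x + - x) by ring.
  replace ((2 * s - 1) * x) with (s * x + s * x + - x) by ring.
  repeat rewrite ?exp_plus, ?exp_neg in *.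
  unfold Rdiv in *.
  assert (hX := exp_pos x). assert (hY := exp_pos (s*x)).
  set (X := exp x) in *. set (Y := exp (s*x)) in *.
  set (E := exp (rho * ln ((Y + / Y) * / 2))).
  replace s with (/(1+rho)) by reflexivity.
  field. repeat split; try lra; nra.
Qed.

Lemma deriv_cont f df t : is_derive f t df -> continuity_pt f t.
Proof.
  intro h. apply continuity_pt_filterlim. apply (ex_derive_continuous f t).
  exists df; exact h.
Qed.

Lemma mvt_le (f df : R -> R) a b : a <= b ->
  (forall t, a <= t <= b -> is_derive f t (df t)) ->
  (forall t, a < t < b -> df t <= 0) -> f b <= f a.
Proof.
  intros hab hd hs.
  destruct (Req_dec a b) as [e|ne]. { subst; lra. }
  destruct (MVT_cor2 f df a b) as [c [he hc]]; [lra| |].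
  - intros t ht. apply is_derive_Reals. apply hd; lra.
  - assert (df c <= 0) by (apply hs; lra). nra.
Qed.

Lemma mvt_lt (f df : R -> R) a b : a < b ->
  (forall t, a <= t <= b -> is_derive f t (df t)) ->
  (forall t, a < t < b -> df t < 0) -> f b < f a.
Proof.
  intros hab hd hs.
  destruct (MVT_cor2 f df a b) as [c [he hc]]; [lra| |].
  - intros t ht. apply is_derive_Reals. apply hd; lra.
  - assert (df c < 0) by (apply hs; lra). nra.
Qed.

Lemma mvt_ge (f df : R -> R) a b : a <= b ->
  (forall t, a <= t <= b -> is_derive f t (df t)) ->
  (forall t, a < t < b -> 0 <= df t) -> f a <= f b.
Proof.
  intros hab hd hs.
  assert (h := mvt_le (fun t => - f t) (fun t => - df t) a b hab).
  assert (- f b <= - f a); [|lra]. apply h.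
  - intros t ht. apply (is_derive_opp f). auto.
  - intros t ht. specialize (hs t ht). lra.
Qed.

Lemma cosh_mono t u : 0 <= t <= u -> cosh t <= cosh u.
Proof.
  intros [h0 h1]. unfold cosh.
  assert (exp t <= exp u) by (destruct (Req_dec t u); [subst; lra| left; apply exp_increasing; lra]).
  assert (hm : exp (-u) * exp u = 1) by (rewrite <- exp_plus; replace (-u+u) with 0 by ring; apply exp_0).
  assert (hm' : exp (-t) * exp t = 1) by (rewrite <- exp_plus; replace (-t+t) with 0 by ring; apply exp_0).
  assert (exp (-u) <= exp (-t)) by (destruct (Req_dec t u); [subst; lra| left; apply exp_increasing; lra]).
  assert (exp (-u) * exp (-t) <= 1).
  { rewrite <- exp_plus, <- exp_0. destruct (Req_dec (-u + -t) 0) as [e|e]; [rewrite e; lra|].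
    left; apply exp_increasing; lra. }
  assert (0 < exp t) by apply exp_pos. assert (0 < exp u) by apply exp_pos.
  assert (0 < exp (-t)) by apply exp_pos. assert (0 < exp (-u)) by apply exp_pos.
  (* e^u + e^-u - e^t - e^-t = (e^u - e^t)(1 - e^{-u}e^{-t}) *)
  assert (exp (-t) - exp (-u) = (exp u - exp t) * (exp (-u) * exp (-t))).
  { transitivity (exp (-t) * (exp (-u) * exp u) - exp (-u) * (exp (-t) * exp t)). rewrite hm, hm'; ring. ring. }
  nra.
Qed.

Lemma cosh_even t : cosh (- t) = cosh t.
Proof. unfold cosh. rewrite Ropp_involutive. lra. Qed.

Lemma cosh_abs t u : Rabs t <= u -> cosh t <= cosh u.
Proof.
  intro h. destruct (Rle_dec 0 t).
  - rewrite Rabs_right in h by lra. apply cosh_mono; lra.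
  - rewrite Rabs_left in h by lra. rewrite <- cosh_even. apply cosh_mono; lra.
Qed.

Lemma sinh_derive t : is_derive sinh t (cosh t).
Proof. apply is_derive_Reals, derivable_pt_lim_sinh. Qed.

Lemma sinh_conv x y : 0 <= x -> -x <= y -> (y - x) * cosh x <= sinh y - sinh x.
Proof.
  intros hx hy. destruct (Rle_dec x y).
  - (* g(t) = sinh t - t cosh x increasing on [x,y] *)
    assert (h := mvt_ge (fun t => sinh t - t * cosh x) (fun t => cosh t - cosh x) x y r).
    simpl in h. assert (sinh x - x * cosh x <= sinh y - y * cosh x); [|lra].
    apply h.
    + intros t ht. apply (is_derive_minus sinh (fun t => t * cosh x)). apply sinh_derive.
      auto_derive; auto; ring.
    + intros t ht. assert (cosh x <= cosh t) by (apply cosh_mono; lra). lra.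
  - assert (h := mvt_le (fun t => sinh t - t * cosh x) (fun t => cosh t - cosh x) y x).
    simpl in h. assert (sinh x - x * cosh x <= sinh y - y * cosh x); [|lra].
    apply h. lra.
    + intros t ht. apply (is_derive_minus sinh (fun t => t * cosh x)). apply sinh_derive.
      auto_derive; auto; ring.
    + intros t ht. assert (cosh t <= cosh x) by (apply cosh_abs; unfold Rabs; destruct Rcase_abs; lra). lra.
Qed.

Lemma dRf_nonpos rho x : -1 < rho -> 0 < x -> dRf rho x <= 0.
Proof.
  intros hr hx. unfold dRf. set (s := /(1+rho)).
  assert (hs : 0 < s) by (apply Rinv_0_lt_compat; lra).
  assert (h := sinh_conv x ((2*s-1)*x) ltac:(lra) ltac:(nra)).
  assert (0 < Ef rho x) by apply exp_pos.
  assert (0 < cosh (s*x)) by apply cosh_pos.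
  assert (0 <= Ef rho x / (x * x * cosh (s * x))).
  { left. apply Rdiv_lt_0_compat; auto. apply Rmult_lt_0_compat; nra. }
  apply Rmult_le_0_l; auto.
  assert ((2 * s - 1) * x - x = 2 * ((s-1) * x)) by ring. nra.
Qed.

Lemma Rf_mono rho x y : -1 < rho -> 0 < x <= y -> Rf rho y <= Rf rho x.
Proof.
  intros hr hxy. apply (mvt_le (Rf rho) (dRf rho)); try lra.
  - intros t ht. apply Rf_derive; lra.
  - intros t ht. apply dRf_nonpos; lra.
Qed.

Lemma der_affine f df c k t : is_derive f t df -> is_derive (fun u => c + k * f u) t (k * df).
Proof. intro H.
  assert (H1 := is_derive_const c t). assert (H2 := is_derive_scal f t k df H).
  assert (H3 := is_derive_plus _ _ _ _ _ H1 H2).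
  replace (k * df) with (plus zero (scal k df)). exact H3.
  rewrite plus_zero_l; reflexivity. Qed.

Lemma der_shift f df c t : is_derive f t df -> is_derive (fun u => f u - c) t df.
Proof. intro H.
  assert (H1 := is_derive_const c t).
  assert (H3 := is_derive_minus _ _ _ _ _ H H1).
  replace df with (minus df zero). exact H3.
  rewrite minus_zero_r; reflexivity. Qed.

Lemma der_comb f g df dg k t : is_derive f t df -> is_derive g t dg ->
  is_derive (fun u => f u - k * g u) t (df - k * dg).
Proof. intros H G.
  assert (H2 := is_derive_scal g t k dg G).
  assert (H3 := is_derive_minus _ _ _ _ _ H H2).
  exact H3. Qed.

Lemma dGx_eq rho t : -1 < rho -> t <> 0 -> dGx rho t = ln 2 * Rf rho t * dcx t.
Proof.
  intros hr ht. unfold dGx, Rf, dcx. pose proof ln2_pos. pose proof (cosh_pos t).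
  field. repeat split; lra.
Qed.

Lemma dGx_0 rho : dGx rho 0 = 0.
Proof. unfold dGx. rewrite Rmult_0_r, sinh_0. lra. Qed.
Lemma dcx_0 : dcx 0 = 0.
Proof. unfold dcx. lra. Qed.

Lemma dcx_pos t : 0 < t -> 0 < dcx t.
Proof. intro h. unfold dcx. pose proof ln2_pos. pose proof (cosh_pos t).
  apply Rdiv_lt_0_compat; auto. apply Rmult_lt_0_compat; auto. apply Rmult_lt_0_compat; auto. Qed.

Lemma tangent_x rho x0 x : -1 < rho -> 0 < x0 -> 0 <= x ->
  Gx rho x <= Gx rho x0 + ln 2 * Rf rho x0 * (cx x - cx x0).
Proof.
  intros hr h0 hx. set (lam := ln 2 * Rf rho x0).
  set (D := fun t => Gx rho x0 + lam * (cx t - cx x0) - Gx rho t).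
  assert (hD : forall t, is_derive D t (lam * dcx t - dGx rho t)).
  { intro t. unfold D. apply (is_derive_minus (fun t => Gx rho x0 + lam * (cx t - cx x0)) (Gx rho)).
    - apply (der_affine (fun t => cx t - cx x0)).
      apply der_shift. apply cx_derive.
    - apply Gx_derive; auto. }
  assert (D x0 = 0) by (unfold D; ring).
  pose proof ln2_pos.
  assert (0 <= D x); [|unfold D in *; lra].
  destruct (Rle_dec x x0).
  - assert (D x0 <= D x); [|lra]. apply (mvt_le D (fun t => lam * dcx t - dGx rho t)); auto.
    intros t ht. rewrite dGx_eq by lra. unfold lam.
    assert (Rf rho x0 <= Rf rho t) by (apply Rf_mono; lra).
    assert (0 < dcx t) by (apply dcx_pos; lra). assert (0 < ln 2 * dcx t) by (apply Rmult_lt_0_compat; lra). nra.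
  - assert (D x0 <= D x); [|lra]. apply (mvt_ge D (fun t => lam * dcx t - dGx rho t)); [lra|auto|].
    intros t ht. rewrite dGx_eq by lra. unfold lam.
    assert (Rf rho t <= Rf rho x0) by (apply Rf_mono; lra).
    assert (0 < dcx t) by (apply dcx_pos; lra). assert (0 < ln 2 * dcx t) by (apply Rmult_lt_0_compat; lra). nra.
Qed.

Lemma chord_x rho k x : -1 < rho -> 0 <= x ->
  Gx rho 0 - k * cx 0 <= Gx rho x - k * cx x \/
  (forall y, x <= y -> Gx rho y - k * cx y <= Gx rho x - k * cx x).
Proof.
  intros hr hx. set (E := fun t => Gx rho t - k * cx t).
  assert (hD : forall t, is_derive E t (dGx rho t - k * dcx t)).
  { intro t. unfold E. apply der_comb. apply Gx_derive; auto. apply cx_derive. }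
  pose proof ln2_pos.
  destruct (Req_dec x 0) as [->|hx0]. { left. lra. }
  destruct (Rle_dec k (ln 2 * Rf rho x)).
  - left. apply (mvt_ge E (fun t => dGx rho t - k * dcx t) 0 x hx); auto.
    intros t ht. rewrite dGx_eq by lra.
    assert (Rf rho x <= Rf rho t) by (apply Rf_mono; lra).
    assert (ln 2 * Rf rho x <= ln 2 * Rf rho t) by (apply Rmult_le_compat_l; lra).
    assert (0 < dcx t) by (apply dcx_pos; lra). nra.
  - right. intros y hy. apply (mvt_le E (fun t => dGx rho t - k * dcx t) x y hy); auto.
    intros t ht. rewrite dGx_eq by lra.
    assert (Rf rho t <= Rf rho x) by (apply Rf_mono; lra).
    assert (ln 2 * Rf rho t <= ln 2 * Rf rho x) by (apply Rmult_le_compat_l; lra).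
    assert (0 < dcx t) by (apply dcx_pos; lra). nra.
Qed.

Lemma Gx_strict rho x y : -1 < rho -> 0 <= x < y ->
  (0 < rho -> Gx rho y < Gx rho x) /\ (rho < 0 -> Gx rho x < Gx rho y).
Proof.
  intros hr hxy. split; intro hs.
  - apply (mvt_lt (Gx rho) (dGx rho)); [lra| intros; apply Gx_derive; auto |].
    intros t ht. unfold dGx.
    assert (/(1+rho) < 1). { rewrite <- Rinv_1. apply Rinv_lt_contravar; lra. }
    assert (0 < t) by lra. assert ((/(1+rho) - 1) * t < 0) by nra.
    assert (sinh ((/(1+rho) - 1) * t) < 0) by (rewrite <- sinh_0; apply sinh_lt; lra).
    assert (0 < Ef rho t) by apply exp_pos. pose proof (cosh_pos t).
    unfold Rdiv. assert (0 < / (cosh t * cosh t)) by (apply Rinv_0_lt_compat; nra).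
    set (u := sinh ((/(1+rho) - 1) * t)) in *. set (e := Ef rho t) in *. set (v := / (cosh t * cosh t)) in *.
    assert (0 < e * v) by nra. nra.
  - assert (- Gx rho y < - Gx rho x); [|lra].
    apply (mvt_lt (fun t => - Gx rho t) (fun t => - dGx rho t)); [lra| intros; apply (is_derive_opp (Gx rho)); apply Gx_derive; auto |].
    intros t ht. unfold dGx.
    assert (1 < /(1+rho)). { rewrite <- Rinv_1. apply Rinv_lt_contravar; lra. }
    assert (0 < t) by lra. assert (0 < (/(1+rho) - 1) * t) by nra.
    assert (0 < sinh ((/(1+rho) - 1) * t)) by (rewrite <- sinh_0; apply sinh_lt; lra).
    assert (0 < Ef rho t) by apply exp_pos. pose proof (cosh_pos t).
    unfold Rdiv. assert (0 < / (cosh t * cosh t)) by (apply Rinv_0_lt_compat; nra).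
    set (u := sinh ((/(1+rho) - 1) * t)) in *. set (e := Ef rho t) in *. set (v := / (cosh t * cosh t)) in *.
    assert (0 < e * v) by nra. nra.
Qed.

Lemma cx_strict x y : 0 <= x < y -> cx x < cx y.
Proof.
  intros h. assert (- cx y < - cx x); [|lra].
  apply (mvt_lt (fun t => - cx t) (fun t => - dcx t)); [lra| intros; apply (is_derive_opp cx); apply cx_derive |].
  intros t ht. assert (0 < dcx t) by (apply dcx_pos; lra). lra.
Qed.

Definition Gp rho p := Rpower 2 (-rho) * Rpower (rpow p (/(1+rho)) + rpow (1-p) (/(1+rho))) (1+rho).
Definition cp p := 1 - hb p.
Definition px x := / (1 + exp (2 * x)).

Lemma Fbsc_Gp rho C : Fbsc rho C = Gp rho (hinv (1 - C)).
Proof. reflexivity. Qed.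

Lemma rpow_pos x a : 0 < x -> rpow x a = exp (a * ln x).
Proof. intro h. unfold rpow. destruct (Rle_dec x 0); [lra|reflexivity]. Qed.

Lemma px_split x : px x = exp (-x) * / (exp x + exp (-x)) /\
                   1 - px x = exp x * / (exp x + exp (-x)).
Proof.
  unfold px. rewrite exp_neg. replace (2 * x) with (x + x) by ring. rewrite exp_plus.
  assert (hX := exp_pos x). set (X := exp x) in *.
  split; field; repeat split; try lra. all: try nra. all: try (apply Rgt_not_eq; lra).
Qed.

Lemma ln_px x : ln (px x) = - x - ln (exp x + exp (-x)) /\
                ln (1 - px x) = x - ln (exp x + exp (-x)).
Proof.
  destruct (px_split x) as [h1 h2]. rewrite h2, h1.
  assert (0 < exp x + exp (-x)) by (pose proof (exp_pos x); pose proof (exp_pos (-x)); lra).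
  rewrite !ln_mult, !ln_Rinv, !ln_exp; try apply exp_pos; try apply Rinv_0_lt_compat; auto.
Qed.

Lemma px_pos x : 0 < px x /\ 0 < 1 - px x.
Proof.
  destruct (px_split x) as [h1 h2]. rewrite h2, h1.
  assert (0 < exp x + exp (-x)) by (pose proof (exp_pos x); pose proof (exp_pos (-x)); lra).
  split; apply Rmult_lt_0_compat; try apply exp_pos; apply Rinv_0_lt_compat; auto.
Qed.

Lemma Gp_link rho x : -1 < rho -> Gp rho (px x) = Gx rho x.
Proof.
  intro hr. destruct (px_pos x) as [p1 p2]. destruct (ln_px x) as [l1 l2].
  set (s := /(1+rho)).
  assert (hs : (1+rho) * s = 1) by (unfold s; field; lra).
  unfold Gp. fold s. rewrite !rpow_pos by auto. rewrite l1, l2.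
  set (K := exp x + exp (-x)).
  assert (hK : 0 < K) by (unfold K; pose proof (exp_pos x); pose proof (exp_pos (-x)); lra).
  assert (e1 : exp (s * (- x - ln K)) + exp (s * (x - ln K)) =
               exp (- (s * ln K)) * (exp (s * x) + exp (- (s * x)))).
  { rewrite Rmult_plus_distr_l. replace (s * (- x - ln K)) with (- (s * ln K) + - (s*x)) by ring.
    replace (s * (x - ln K)) with (- (s * ln K) + s * x) by ring. rewrite !exp_plus. ring. }
  rewrite e1. unfold Gx. fold s. unfold cosh.
  assert (hc : 0 < exp (s * x) + exp (- (s * x))) by (pose proof (exp_pos (s*x)); pose proof (exp_pos (-(s*x))); lra).
  unfold Rpower. rewrite ln_mult, ln_exp by (try apply exp_pos; auto).
  unfold Rdiv. rewrite ln_mult by (auto; lra). rewrite ln_Rinv by lra.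
  replace ((exp x + exp (- x)) * / 2) with (exp (ln K - ln 2)).
  2:{ unfold Rminus. rewrite exp_plus, exp_ln, exp_neg, exp_ln; auto; lra. }
  rewrite <- exp_neg. rewrite <- !exp_plus. f_equal.
  replace s with (/(1+rho)) by reflexivity. field. lra.
Qed.

Lemma xlog2_pos p : 0 < p -> xlog2 p = p * (ln p / ln 2).
Proof. intro h. unfold xlog2, log2. destruct (Rle_dec p 0); [lra|reflexivity]. Qed.

Lemma cp_link x : cp (px x) = cx x.
Proof.
  destruct (px_pos x) as [p1 p2]. destruct (ln_px x) as [l1 l2]. destruct (px_split x) as [s1 s2].
  pose proof ln2_pos.
  unfold cp, hb. rewrite !xlog2_pos by auto. rewrite l1, l2.
  unfold cx, cosh, sinh.
  set (K := exp x + exp (- x)) in *.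
  assert (hK : 0 < K) by (unfold K; pose proof (exp_pos x); pose proof (exp_pos (-x)); lra).
  replace ((exp x - exp (-x)) / 2 / (K / 2)) with (1 - 2 * px x).
  2:{ rewrite s1. field_simplify_eq; [|lra]. unfold K; ring. }
  replace (ln (K / 2)) with (ln K - ln 2).
  2:{ unfold Rdiv. rewrite ln_mult, ln_Rinv; try lra. }
  field. lra.
Qed.

Lemma px_inv q : 0 < q < 1 -> px (ln ((1 - q) / q) / 2) = q.
Proof.
  intro h. unfold px. replace (2 * (ln ((1 - q) / q) / 2)) with (ln ((1-q)/q)) by field.
  rewrite exp_ln. field. split; lra. apply Rdiv_lt_0_compat; lra.
Qed.

Lemma px_inv_nonneg q : 0 < q <= /2 -> 0 <= ln ((1 - q) / q) / 2.
Proof.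
  intro h. assert (1 <= (1-q)/q).
  { apply (Rmult_le_reg_r q); [lra|]. field_simplify; lra. }
  assert (0 <= ln ((1-q)/q)). { rewrite <- ln_1. destruct (Req_dec 1 ((1-q)/q)) as [e|e]; [rewrite <- e; lra|].
    left. apply ln_increasing; lra. }
  lra.
Qed.

Lemma px_anti x y : x <= y -> px y <= px x.
Proof.
  intro h. unfold px. apply Rinv_le_contravar. pose proof (exp_pos (2*x)); lra.
  assert (exp (2*x) <= exp (2*y)).
  { destruct (Req_dec x y); [subst; lra|]. left; apply exp_increasing; lra. }
  lra.
Qed.

Lemma px_half x : 0 <= x -> px x <= /2.
Proof.
  intro h. replace (/2) with (px 0). apply px_anti; auto.
  unfold px. rewrite Rmult_0_r, exp_0. field.
Qed.

Lemma cont_eps f x : (forall e, 0 < e -> exists d, 0 < d /\ forall y, Rabs (y - x) < d -> Rabs (f y - f x) < e) ->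
  continuity_pt f x.
Proof.
  intro h. unfold continuity_pt, continue_in, limit1_in, limit_in. intros e he.
  destruct (h e he) as [d [hd hh]]. exists d. split; auto.
  intros y [_ hy]. simpl in *. unfold R_dist in *. auto.
Qed.

Lemma cont_loc f g x d : 0 < d -> (forall y, Rabs (y - x) < d -> f y = g y) ->
  continuity_pt g x -> continuity_pt f x.
Proof.
  intros hd he hg. apply continuity_pt_filterlim. apply continuity_pt_filterlim in hg.
  change (continuous f x). apply (continuous_ext_loc f g x); auto.
  exists (mkposreal d hd). intros y hy. symmetry. apply he. exact hy.
Qed.

Lemma ln_lt_self y : 0 < y -> ln y < y.
Proof.
  intro h. destruct (Req_dec (ln y) 0) as [e|e].
  - rewrite e; lra.
  - assert (h1 := exp_ineq1 (ln y) e). rewrite exp_ln in h1; auto. lra.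
Qed.

Lemma rpow_cont a p : 0 < a -> continuity_pt (fun p => rpow p a) p.
Proof.
  intro ha. destruct (Rlt_le_dec 0 p) as [hp|hp].
  - apply (cont_loc _ (fun p => exp (a * ln p)) p p); auto.
    + intros y hy. apply rpow_pos. unfold Rabs in hy; destruct Rcase_abs in hy; lra.
    + apply (deriv_cont _ (a * / p * exp (a * ln p))). auto_derive; auto. ring.
  - destruct (Rlt_le_dec p 0) as [hn|hz].
    + apply (cont_loc _ (fun _ => 0) p (-p)); [lra| |].
      * intros y hy. unfold rpow. destruct (Rle_dec y 0); auto. unfold Rabs in hy; destruct Rcase_abs in hy; lra.
      * apply continuity_pt_const. intros u v; reflexivity.
    + assert (p = 0) by lra. subst p. apply cont_eps. intros e he.
      exists (exp (ln e / a)). split; [apply exp_pos|].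
      intros y hy. unfold rpow at 2. destruct (Rle_dec 0 0) as [_|n]; [|lra].
      unfold rpow. destruct (Rle_dec y 0). { rewrite Rminus_0_r, Rabs_R0; auto. }
        rewrite !Rminus_0_r in *. rewrite Rabs_right in hy by lra.
      unfold Rpower. rewrite Rabs_right by (left; apply exp_pos).
      rewrite <- (exp_ln e) by auto. apply exp_increasing.
      assert (ln y < ln e / a). { rewrite <- (ln_exp (ln e / a)). apply ln_increasing; lra. }
      apply (Rmult_lt_compat_l a) in H; auto. field_simplify in H; lra.
Qed.

Lemma xlog2_cont p : continuity_pt xlog2 p.
Proof.
  pose proof ln2_pos.
  destruct (Rlt_le_dec 0 p) as [hp|hp].
  - apply (cont_loc _ (fun p => p * (ln p / ln 2)) p p); auto.
    + intros y hy. apply xlog2_pos. unfold Rabs in hy; destruct Rcase_abs in hy; lra.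
    + apply (deriv_cont _ (1 * (ln p / ln 2) + p * (/ p / ln 2))). auto_derive; auto. lra.
  - destruct (Rlt_le_dec p 0) as [hn|hz].
    + apply (cont_loc _ (fun _ => 0) p (-p)); [lra| |].
      * intros y hy. unfold xlog2. destruct (Rle_dec y 0); auto. unfold Rabs in hy; destruct Rcase_abs in hy; lra.
      * apply continuity_pt_const. intros u v; reflexivity.
    + assert (p = 0) by lra. subst p. apply cont_eps. intros e he.
      set (d := Rmin 1 ((e * ln 2 / 2) * (e * ln 2 / 2))).
      assert (0 < e * ln 2 / 2) by (apply Rmult_lt_0_compat; [apply Rmult_lt_0_compat|]; lra).
      exists d. split. { unfold d. apply Rmin_glb_lt; nra. }
      intros y hy. unfold xlog2 at 2. destruct (Rle_dec 0 0) as [_|n]; [|lra].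
      unfold xlog2. destruct (Rle_dec y 0). { rewrite Rminus_0_r, Rabs_R0; auto. }
      rewrite !Rminus_0_r in *. rewrite Rabs_right in hy by lra.
      assert (hy1 : y < 1) by (assert (d <= 1) by apply Rmin_l; lra).
      assert (hy2 : y < (e * ln 2 / 2) * (e * ln 2 / 2)) by (assert (d <= (e * ln 2 / 2) * (e * ln 2 / 2)) by apply Rmin_r; lra).
      unfold log2.
      assert (hl : ln y < 0) by (rewrite <- ln_1; apply ln_increasing; lra).
      (* -ln y < 2 / sqrt y *)
      assert (hs : 0 < sqrt y) by (apply sqrt_lt_R0; lra).
      assert (hsq : sqrt y * sqrt y = y) by (apply sqrt_sqrt; lra).
      assert (h1 : ln (/ sqrt y) < / sqrt y) by (apply ln_lt_self; apply Rinv_0_lt_compat; auto).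
      rewrite ln_Rinv in h1 by auto.
      assert (h2 : ln y = 2 * ln (sqrt y)).
      { rewrite <- hsq at 1. rewrite ln_mult by auto. ring. }
      assert (h3 : sqrt y < e * ln 2 / 2).
      { apply Rsqr_incrst_0; unfold Rsqr; try lra. }
      rewrite Rabs_left.
      2:{ assert (y * ln y < 0) by nra. unfold Rdiv. assert (0 < / ln 2) by (apply Rinv_0_lt_compat; lra). nra. }
      assert (- (y * ln y) < 2 * sqrt y).
      { rewrite h2. rewrite <- hsq at 1.
        assert (- ln (sqrt y) * sqrt y < 1).
        { apply (Rmult_lt_compat_r (sqrt y)) in h1; auto. rewrite Rinv_l in h1; lra. }
        nra. }
      apply (Rmult_lt_reg_r (ln 2)); auto. unfold Rdiv.
      replace (- (y * (ln y * / ln 2)) * ln 2) with (- (y * ln y)) by (field; lra). nra.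
Qed.

Lemma rpow_nonneg x a : 0 <= rpow x a.
Proof. unfold rpow. destruct (Rle_dec x 0); [lra|]. left; apply exp_pos. Qed.

Lemma rpow_gt0 x a : 0 < x -> 0 < rpow x a.
Proof. intro h. rewrite rpow_pos by auto. apply exp_pos. Qed.

Lemma cont_1m p : continuity_pt (fun p => 1 - p) p.
Proof. apply (deriv_cont _ (-1)). auto_derive; auto; ring. Qed.

Lemma hb_cont p : continuity_pt hb p.
Proof.
  unfold hb. apply (continuity_pt_minus (fun p => - xlog2 p) (fun p => xlog2 (1-p))).
  - apply (continuity_pt_opp xlog2). apply xlog2_cont.
  - apply (continuity_pt_comp (fun p => 1-p) xlog2). apply cont_1m. apply xlog2_cont.
Qed.

Lemma cp_cont p : continuity_pt cp p.
Proof.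
  unfold cp. apply (continuity_pt_minus (fun _ => 1) hb). apply continuity_pt_const; intros u v; reflexivity.
  apply hb_cont.
Qed.

Lemma S_pos rho p : -1 < rho -> 0 < rpow p (/(1+rho)) + rpow (1-p) (/(1+rho)).
Proof.
  intro hr. pose proof (rpow_nonneg p (/(1+rho))). pose proof (rpow_nonneg (1-p) (/(1+rho))).
  destruct (Rlt_le_dec 0 p).
  - pose proof (rpow_gt0 p (/(1+rho)) r). lra.
  - pose proof (rpow_gt0 (1-p) (/(1+rho)) ltac:(lra)). lra.
Qed.

Lemma Gp_cont rho p : -1 < rho -> continuity_pt (Gp rho) p.
Proof.
  intro hr. unfold Gp.
  assert (hs : 0 < /(1+rho)) by (apply Rinv_0_lt_compat; lra).
  apply (continuity_pt_mult (fun _ => Rpower 2 (-rho)) (fun p => Rpower (rpow p (/(1+rho)) + rpow (1-p) (/(1+rho))) (1+rho))).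
  apply continuity_pt_const; intros u v; reflexivity.
  apply (continuity_pt_comp (fun p => rpow p (/(1+rho)) + rpow (1-p) (/(1+rho))) (fun u => Rpower u (1+rho))).
  - apply (continuity_pt_plus (fun p => rpow p (/(1+rho))) (fun p => rpow (1-p) (/(1+rho)))).
    apply rpow_cont; auto.
    apply (continuity_pt_comp (fun p => 1-p) (fun p => rpow p (/(1+rho)))). apply cont_1m. apply rpow_cont; auto.
  - pose proof (S_pos rho p hr).
    apply (deriv_cont _ ((1+rho) * / (rpow p (/(1+rho)) + rpow (1-p) (/(1+rho))) *
       Rpower (rpow p (/(1+rho)) + rpow (1-p) (/(1+rho))) (1+rho))).
    unfold Rpower. auto_derive; auto. ring.
Qed.

Definition xq q := ln ((1 - q) / q) / 2.

Lemma xq_spec q : 0 < q <= /2 -> 0 <= xq q /\ px (xq q) = q.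
Proof. intro h. split. apply px_inv_nonneg; auto. apply px_inv; lra. Qed.

Lemma px_anti_strict x y : x < y -> px y < px x.
Proof.
  intro h. unfold px. apply Rinv_lt_contravar.
  pose proof (exp_pos (2*x)); pose proof (exp_pos (2*y)); nra.
  assert (exp (2*x) < exp (2*y)) by (apply exp_increasing; lra). lra.
Qed.

Lemma xq_le q1 q2 : 0 < q1 <= q2 -> q2 <= /2 -> xq q2 <= xq q1.
Proof.
  intros h1 h2. destruct (xq_spec q1) as [a1 b1]; [lra|]. destruct (xq_spec q2) as [a2 b2]; [lra|].
  destruct (Rle_dec (xq q2) (xq q1)); auto.
  assert (px (xq q2) < px (xq q1)) by (apply px_anti_strict; lra). lra.
Qed.

Lemma xq_lt q1 q2 : 0 < q1 < q2 -> q2 <= /2 -> xq q2 < xq q1.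
Proof.
  intros h1 h2. destruct (xq_spec q1) as [a1 b1]; [lra|]. destruct (xq_spec q2) as [a2 b2]; [lra|].
  destruct (Rlt_dec (xq q2) (xq q1)); auto.
  assert (px (xq q2) <= px (xq q1)) by (apply px_anti; lra). lra.
Qed.

Lemma Gp_q rho q : -1 < rho -> 0 < q <= /2 -> Gp rho q = Gx rho (xq q).
Proof. intros hr h. destruct (xq_spec q h) as [_ e]. rewrite <- Gp_link by auto. rewrite e; auto. Qed.

Lemma cp_q q : 0 < q <= /2 -> cp q = cx (xq q).
Proof. intros h. destruct (xq_spec q h) as [_ e]. rewrite <- cp_link. rewrite e; auto. Qed.

Lemma px0 : px 0 = /2.
Proof. unfold px. rewrite Rmult_0_r, exp_0. field. Qed.

Lemma Gx0 rho : Gx rho 0 = 1.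
Proof. unfold Gx. rewrite Rmult_0_r, cosh_0, ln_1, Rmult_0_r, exp_0. field. Qed.

Lemma cx0 : cx 0 = 0.
Proof. unfold cx. rewrite cosh_0, ln_1. field_simplify. lra. pose proof ln2_pos; lra. Qed.

Lemma Gp_half rho : -1 < rho -> Gp rho (/2) = 1.
Proof. intro hr. rewrite <- px0, Gp_link, Gx0; auto. Qed.

Lemma cp_half : cp (/2) = 0.
Proof. rewrite <- px0, cp_link, cx0; auto. Qed.

Lemma Gp0 rho : Gp rho 0 = Rpower 2 (-rho).
Proof.
  unfold Gp. unfold rpow at 1. destruct (Rle_dec 0 0); [|lra].
  rewrite Rminus_0_r. rewrite rpow_pos by lra. rewrite ln_1, Rmult_0_r, exp_0, Rplus_0_l.
  unfold Rpower at 2. rewrite ln_1, Rmult_0_r, exp_0. ring.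
Qed.

Lemma hb0 : hb 0 = 0.
Proof. unfold hb, xlog2. destruct (Rle_dec 0 0); [|lra]. rewrite Rminus_0_r.
  destruct (Rle_dec 1 0); [lra|]. unfold log2. rewrite ln_1. field. pose proof ln2_pos; lra. Qed.

Lemma cp0 : cp 0 = 1.
Proof. unfold cp. rewrite hb0. ring. Qed.

Lemma Gp_sym rho q : Gp rho (1 - q) = Gp rho q.
Proof. unfold Gp. replace (1 - (1 - q)) with q by ring. rewrite Rplus_comm. reflexivity. Qed.

Lemma cp_sym q : cp (1 - q) = cp q.
Proof. unfold cp, hb. replace (1 - (1 - q)) with q by ring. ring. Qed.

Lemma xlog2_neg p : 0 < p < 1 -> xlog2 p < 0.
Proof.
  intro h. rewrite xlog2_pos by lra. pose proof ln2_pos.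
  assert (ln p < 0) by (rewrite <- ln_1; apply ln_increasing; lra).
  unfold Rdiv. assert (0 < / ln 2) by (apply Rinv_0_lt_compat; lra).
  assert (ln p * / ln 2 < 0) by nra. nra.
Qed.

Lemma xlog2_01 p : 0 <= p <= 1 -> xlog2 p <= 0.
Proof.
  intro h. destruct (Req_dec p 0) as [->|h0].
  { unfold xlog2. destruct (Rle_dec 0 0); lra. }
  destruct (Req_dec p 1) as [->|h1].
  { rewrite xlog2_pos by lra. rewrite ln_1. lra. }
  left; apply xlog2_neg; lra.
Qed.

Lemma cp_lt1 q : 0 < q < 1 -> cp q < 1.
Proof. intro h. unfold cp, hb. pose proof (xlog2_neg q h). pose proof (xlog2_neg (1-q) ltac:(lra)). lra. Qed.

Lemma cp_le1 q : 0 <= q <= 1 -> cp q <= 1.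
Proof. intro h. unfold cp, hb. pose proof (xlog2_01 q h). pose proof (xlog2_01 (1-q) ltac:(lra)). lra. Qed.

Lemma cp_pos_half q : 0 < q < /2 -> 0 < cp q.
Proof.
  intro h. rewrite cp_q by lra. rewrite <- cx0. apply cx_strict.
  split; [lra|]. assert (xq (/2) < xq q) by (apply xq_lt; lra).
  destruct (xq_spec (/2)) as [a b]; [lra|]. lra.
Qed.

Lemma cp_nonneg q : 0 <= q <= 1 -> 0 <= cp q.
Proof.
  intro h.
  assert (forall q, 0 <= q <= /2 -> 0 <= cp q).
  { intros r hr. destruct (Req_dec r 0) as [->|r0]. rewrite cp0; lra.
    destruct (Req_dec r (/2)) as [->|r1]. rewrite cp_half; lra.
    left; apply cp_pos_half; lra. }
  destruct (Rle_dec q (/2)). apply H; lra. rewrite <- cp_sym. apply H; lra.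
Qed.

Lemma cp_zero q : 0 <= q <= 1 -> cp q = 0 -> q = /2.
Proof.
  intros h e.
  assert (forall q, 0 <= q <= /2 -> cp q = 0 -> q = /2).
  { intros r hr er. destruct (Req_dec r 0) as [->|r0]. rewrite cp0 in er; lra.
    destruct (Req_dec r (/2)) as [->|r1]; auto.
    pose proof (cp_pos_half r ltac:(lra)). lra. }
  destruct (Rle_dec q (/2)). apply H; lra. rewrite <- cp_sym in e. apply H in e; lra.
Qed.

Lemma cp_one q : 0 <= q <= 1 -> cp q = 1 -> q = 0 \/ q = 1.
Proof.
  intros h e. destruct (Req_dec q 0); auto. destruct (Req_dec q 1); auto.
  pose proof (cp_lt1 q ltac:(lra)). lra.
Qed.

Lemma endpoint_le g M d : continuity_pt g 0 -> 0 < d ->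
  (forall q, 0 < q < d -> g q <= M) -> g 0 <= M.
Proof.
  intros hc hd hq. destruct (Rle_dec (g 0) M) as [r|n]; auto. exfalso.
  unfold continuity_pt, continue_in, limit1_in, limit_in in hc.
  destruct (hc (g 0 - M)) as [a [ha hh]]. lra.
  set (q := Rmin d a / 2).
  assert (0 < Rmin d a) by (apply Rmin_glb_lt; auto).
  assert (Rmin d a <= d) by apply Rmin_l. assert (Rmin d a <= a) by apply Rmin_r.
  specialize (hh q). simpl in hh. unfold R_dist in hh.
  assert (Rabs (g q - g 0) < g 0 - M).
  { apply hh. split. { unfold D_x, no_cond. split; auto. unfold q; lra. }
    rewrite Rminus_0_r, Rabs_right; unfold q; lra. }
  assert (g q <= M) by (apply hq; unfold q; lra).
  unfold Rabs in H2; destruct Rcase_abs in H2; lra.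
Qed.

Lemma tangent_p rho p0 : -1 < rho -> 0 < p0 < /2 ->
  exists lam, forall q, 0 <= q <= 1 -> Gp rho q <= Gp rho p0 + lam * (cp q - cp p0).
Proof.
  intros hr hp. exists (ln 2 * Rf rho (xq p0)).
  destruct (xq_spec p0) as [a0 b0]; [lra|].
  assert (hx0 : 0 < xq p0).
  { assert (xq (/2) < xq p0) by (apply xq_lt; lra). destruct (xq_spec (/2)) as [a b]; lra. }
  set (f := fun q => Gp rho q - ln 2 * Rf rho (xq p0) * (cp q - cp p0)).
  assert (H1 : forall q, 0 < q <= /2 -> f q <= Gp rho p0).
  { intros q hq. unfold f. rewrite Gp_q, cp_q, (Gp_q rho p0), (cp_q p0); auto; try lra.
    destruct (xq_spec q hq) as [a b].
    pose proof (tangent_x rho (xq p0) (xq q) hr hx0 a). lra. }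
  assert (H2 : forall q, 0 <= q <= /2 -> f q <= Gp rho p0).
  { intros q hq. destruct (Req_dec q 0) as [->|]; [|apply H1; lra].
    apply (endpoint_le f _ (/2)); [| lra | intros; apply H1; lra].
    unfold f. apply (continuity_pt_minus (Gp rho) (fun q => ln 2 * Rf rho (xq p0) * (cp q - cp p0))).
    apply Gp_cont; auto.
    apply (continuity_pt_mult (fun _ => ln 2 * Rf rho (xq p0)) (fun q => cp q - cp p0)).
    apply continuity_pt_const; intros u v; reflexivity.
    apply (continuity_pt_minus cp (fun _ => cp p0)). apply cp_cont.
    apply continuity_pt_const; intros u v; reflexivity. }
  intros q hq. destruct (Rle_dec q (/2)).
  - pose proof (H2 q ltac:(lra)). unfold f in *. lra.
  - pose proof (H2 (1-q) ltac:(lra)). unfold f in *. rewrite Gp_sym, cp_sym in H. lra.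
Qed.

Lemma chord_p rho q : -1 < rho -> 0 <= q <= 1 ->
  1 + (Rpower 2 (-rho) - 1) * cp q <= Gp rho q.
Proof.
  intros hr hq. set (k := Rpower 2 (-rho) - 1).
  set (f := fun q => Gp rho q - k * cp q).
  assert (hf0 : f 0 = 1) by (unfold f, k; rewrite Gp0, cp0; ring).
  assert (hcont : continuity_pt f 0).
  { unfold f. apply (continuity_pt_minus (Gp rho) (fun q => k * cp q)). apply Gp_cont; auto.
    apply (continuity_pt_mult (fun _ => k) cp). apply continuity_pt_const; intros u v; reflexivity. apply cp_cont. }
  assert (H : forall q, 0 <= q <= /2 -> 1 <= f q).
  { intros r hr'. destruct (Req_dec r 0) as [->|r0]; [lra|].
    destruct (xq_spec r ltac:(lra)) as [a b].
    assert (hfx : f r = Gx rho (xq r) - k * cx (xq r)) by (unfold f; rewrite Gp_q, cp_q; auto; lra).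
    destruct (chord_x rho k (xq r) hr a) as [h|h].
    - rewrite Gx0, cx0 in h. lra.
    - rewrite hfx. rewrite <- hf0. apply (endpoint_le f _ r hcont); [lra|].
      intros q' hq'. destruct (xq_spec q' ltac:(lra)) as [a' b'].
      unfold f. rewrite Gp_q, cp_q by (auto; lra). apply h.
      apply xq_le; lra. }
  destruct (Rle_dec q (/2)).
  - pose proof (H q ltac:(lra)). unfold f in *. lra.
  - pose proof (H (1-q) ltac:(lra)). unfold f in *. rewrite Gp_sym, cp_sym in H0. lra.
Qed.

Lemma Gp_strict_pos rho q1 q2 : -1 < rho -> 0 < q1 < q2 -> q2 <= /2 ->
  (0 < rho -> Gp rho q1 < Gp rho q2) /\ (rho < 0 -> Gp rho q2 < Gp rho q1).
Proof.
  intros hr h1 h2. rewrite !Gp_q by (auto; lra).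
  pose proof (xq_lt q1 q2 h1 h2). destruct (xq_spec q2) as [a b]; [lra|].
  destruct (Gx_strict rho (xq q2) (xq q1) hr ltac:(lra)) as [u v]. split; auto.
Qed.

Lemma Gp_strict rho q1 q2 : -1 < rho -> 0 <= q1 < q2 -> q2 <= /2 ->
  (0 < rho -> Gp rho q1 < Gp rho q2) /\ (rho < 0 -> Gp rho q2 < Gp rho q1).
Proof.
  intros hr h1 h2. destruct (Req_dec q1 0) as [->|n]; [|apply Gp_strict_pos; auto; lra].
  set (q' := q2 / 2).
  destruct (Gp_strict_pos rho q' q2 hr ltac:(unfold q'; lra) h2) as [u v].
  split; intro hs.
  - apply (Rle_lt_trans _ (Gp rho q')); [| apply u; auto].
    apply (endpoint_le (Gp rho) _ q'). apply Gp_cont; auto. unfold q'; lra.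
    intros q hq. left. apply (Gp_strict_pos rho q q' hr); auto; unfold q' in *; lra.
  - apply (Rlt_le_trans _ (Gp rho q')); [apply v; auto|].
    assert (- Gp rho 0 <= - Gp rho q'); [|lra].
    apply (endpoint_le (fun q => - Gp rho q) _ q').
    apply (continuity_pt_opp (Gp rho)). apply Gp_cont; auto. unfold q'; lra.
    intros q hq. assert (Gp rho q' < Gp rho q); [|lra]. apply (Gp_strict_pos rho q q' hr); auto; unfold q' in *; lra.
Qed.

Lemma cp_anti q1 q2 : 0 <= q1 <= q2 -> q2 <= /2 -> cp q2 <= cp q1.
Proof.
  intros h1 h2. destruct (Req_dec q1 0) as [->|n].
  { rewrite cp0. apply cp_le1; lra. }
  destruct (Req_dec q1 q2) as [->|n2]; [lra|].
  rewrite !cp_q by lra. left. apply cx_strict. split.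
  destruct (xq_spec q2) as [a b]; lra. apply xq_lt; lra.
Qed.

Lemma hb_half : hb (/2) = 1.
Proof. pose proof cp_half. unfold cp in H. lra. Qed.

Lemma hinv_spec v : 0 <= v <= 1 -> 0 <= hinv v <= /2 /\ hb (hinv v) = v.
Proof.
  intro hv. unfold hinv. apply epsilon_spec.
  destruct (IVT_gen hb 0 (/2) v) as [x [hx e]].
  - intro p. apply hb_cont.
  - rewrite hb0, hb_half. rewrite Rmin_left, Rmax_right by lra. auto.
  - rewrite Rmin_left, Rmax_right in hx by lra. exists x; auto.
Qed.

Lemma p0_spec C : 0 <= C <= 1 -> 0 <= hinv (1 - C) <= /2 /\ cp (hinv (1 - C)) = C.
Proof.
  intro h. destruct (hinv_spec (1 - C)) as [a b]; [lra|]. split; auto. unfold cp. rewrite b; ring.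
Qed.

Lemma fold_plus a l : fold_right Rplus a l = fold_right Rplus 0 l + a.
Proof. induction l; simpl. ring. rewrite IHl. ring. Qed.

Lemma sumR_S n f : sumR (S n) f = sumR n f + f n.
Proof. unfold sumR. rewrite seq_S, map_app, fold_right_app. simpl. rewrite fold_plus. ring. Qed.

Lemma sumR_0 f : sumR 0 f = 0.
Proof. reflexivity. Qed.

Lemma sumR_ext n f g : (forall y, (y < n)%nat -> f y = g y) -> sumR n f = sumR n g.
Proof.
  induction n; intro h. reflexivity. rewrite !sumR_S. rewrite IHn by (intros; apply h; lia).
  rewrite h by lia. reflexivity.
Qed.

Lemma sumR_plus n f g : sumR n (fun y => f y + g y) = sumR n f + sumR n g.
Proof. induction n. unfold sumR; simpl; ring. rewrite !sumR_S, IHn. ring. Qed.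

Lemma sumR_scal n k f : sumR n (fun y => k * f y) = k * sumR n f.
Proof. induction n. unfold sumR; simpl; ring. rewrite !sumR_S, IHn. ring. Qed.

Lemma sumR_le n f g : (forall y, (y < n)%nat -> f y <= g y) -> sumR n f <= sumR n g.
Proof.
  induction n; intro h. unfold sumR; simpl; lra. rewrite !sumR_S.
  assert (sumR n f <= sumR n g) by (apply IHn; intros; apply h; lia).
  assert (f n <= g n) by (apply h; lia). lra.
Qed.

Lemma sumR_c0 n : sumR n (fun _ => 0) = 0.
Proof. induction n. reflexivity. rewrite sumR_S, IHn. ring. Qed.

Lemma sumR_nonneg n f : (forall y, (y < n)%nat -> 0 <= f y) -> 0 <= sumR n f.
Proof. intro h. rewrite <- (sumR_c0 n). apply sumR_le. auto. Qed.

Lemma sumR_zero n f : (forall y, (y < n)%nat -> 0 <= f y) -> sumR n f = 0 ->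
  forall y, (y < n)%nat -> f y = 0.
Proof.
  induction n; intros h e y hy. lia. rewrite sumR_S in e.
  assert (0 <= sumR n f) by (apply sumR_nonneg; intros; apply h; lia).
  assert (0 <= f n) by (apply h; lia).
  destruct (Nat.eq_dec y n) as [->|ne]. lra.
  apply IHn. intros; apply h; lia. lra. lia.
Qed.

Definition tF rho w A := if Rlt_dec 0 w then w * Rpower (A / Rpower w (/(1+rho))) rho else 0.
Definition colF rho a b :=
  / 2 * tF rho a (/2 * rpow a (/(1+rho)) + /2 * rpow b (/(1+rho))) +
  / 2 * tF rho b (/2 * rpow a (/(1+rho)) + /2 * rpow b (/(1+rho))).
Definition tC w M := if Rlt_dec 0 w then w * log2 (w / M) else 0.
Definition colC a b := / 2 * tC a (/2 * a + /2 * b) + / 2 * tC b (/2 * a + /2 * b).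

Lemma gallagerF_col rho n W : gallagerF rho n W = sumR n (fun y => colF rho (W false y) (W true y)).
Proof. unfold gallagerF, avg2. rewrite <- !sumR_scal, <- sumR_plus. apply sumR_ext; intros; reflexivity. Qed.

Lemma capacity_col n W : capacity n W = sumR n (fun y => colC (W false y) (W true y)).
Proof. unfold capacity, avg2. rewrite <- !sumR_scal, <- sumR_plus. apply sumR_ext; intros; reflexivity. Qed.

Lemma tF_eq rho w A : -1 < rho -> 0 <= w -> 0 < A -> tF rho w A = rpow w (/(1+rho)) * Rpower A rho.
Proof.
  intros hr hw hA. unfold tF. destruct (Rlt_dec 0 w) as [h|h].
  - rewrite rpow_pos by auto. unfold Rpower.
    assert (0 < exp (/(1+rho) * ln w)) by apply exp_pos.
    unfold Rdiv. rewrite ln_mult, ln_Rinv, ln_exp; auto; try (apply Rinv_0_lt_compat; auto).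
    rewrite <- (exp_ln w) at 1 by auto. rewrite <- !exp_plus. f_equal. field. lra.
  - assert (w = 0) by lra. subst. unfold rpow. destruct (Rle_dec 0 0); [ring|lra].
Qed.

Lemma rpow_mul t q a : 0 < t -> 0 <= q -> rpow (t * q) a = Rpower t a * rpow q a.
Proof.
  intros ht hq. destruct (Req_dec q 0) as [->|n].
  - rewrite Rmult_0_r. unfold rpow. destruct (Rle_dec 0 0); [ring|lra].
  - rewrite !rpow_pos by nra. unfold Rpower. rewrite ln_mult by lra. rewrite <- exp_plus. f_equal; ring.
Qed.

Lemma colF_val rho a b : -1 < rho -> 0 <= a -> 0 <= b ->
  colF rho a b = (a + b) / 2 * Gp rho (a / (a + b)).
Proof.
  intros hr ha hb. destruct (Req_dec (a + b) 0) as [e|ne].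
  { assert (a = 0) by lra. assert (b = 0) by lra. subst. unfold colF, tF.
    destruct (Rlt_dec 0 0); [lra|]. lra. }
  set (t := a + b). assert (ht : 0 < t) by (unfold t; lra).
  set (p := a / t).
  assert (ea : a = t * p) by (unfold p; field; lra).
  assert (eb : b = t * (1 - p)) by (unfold p, t; field; lra).
  assert (hp : 0 <= p <= 1). { unfold p. split. apply Rdiv_le_0_compat; lra.
    apply (Rmult_le_reg_r t); auto. field_simplify; unfold t; lra. }
  set (s := /(1+rho)).
  set (S := rpow p s + rpow (1-p) s).
  assert (hS : 0 < S) by (apply S_pos; auto).
  set (A := /2 * rpow a s + /2 * rpow b s).
  assert (eA : A = /2 * Rpower t s * S).
  { unfold A, S. rewrite ea, eb. rewrite !rpow_mul by lra. ring. }
  assert (hA : 0 < A). { rewrite eA. assert (0 < Rpower t s) by apply exp_pos. 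
    apply Rmult_lt_0_compat; auto. apply Rmult_lt_0_compat; auto; lra. }
  unfold colF. fold s. fold A.
  rewrite !tF_eq by auto. fold s.
  replace (/ 2 * (rpow a s * Rpower A rho) + / 2 * (rpow b s * Rpower A rho)) with (A * Rpower A rho) by (unfold A; ring).
  unfold Gp. fold s. fold S.
  rewrite eA. unfold Rpower.
  assert (0 < exp (s * ln t)) by apply exp_pos.
  rewrite !ln_mult by (try apply Rmult_lt_0_compat; try apply Rinv_0_lt_compat; auto; lra).
  rewrite ln_exp, ln_Rinv by lra.
  rewrite <- (exp_ln t) at 2 by auto. unfold Rdiv.
  replace (/ 2) with (exp (- ln 2)) at 4 by (rewrite exp_neg, exp_ln; auto; lra).
  replace (/ 2) with (exp (- ln 2)) at 1 by (rewrite exp_neg, exp_ln; auto; lra).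
  rewrite ln_exp. replace S with (exp (ln S)) at 1 by (apply exp_ln; auto).
  replace (t * / 2) with (exp (ln t + - ln 2)) by (rewrite exp_plus, exp_ln, exp_neg, exp_ln; auto; lra).
  rewrite <- !exp_plus. f_equal. unfold s. field. lra.
Qed.

Lemma tC_eq t q : 0 < t -> 0 <= q -> tC (t * q) (t / 2) = t * (xlog2 q + q).
Proof.
  intros ht hq. unfold tC. pose proof ln2_pos.
  destruct (Rlt_dec 0 (t * q)) as [h|h].
  - assert (0 < q) by (destruct (Req_dec q 0) as [->|]; [rewrite Rmult_0_r in h; lra| lra]).
    rewrite xlog2_pos by auto. unfold log2.
    replace (t * q / (t / 2)) with (2 * q) by (field; lra).
    rewrite ln_mult by lra. field. lra.
  - assert (q = 0) by (destruct (Req_dec q 0); auto; assert (0 < t * q) by (apply Rmult_lt_0_compat; lra); lra).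
    subst. unfold xlog2. destruct (Rle_dec 0 0); [ring|lra].
Qed.

Lemma colC_val a b : 0 <= a -> 0 <= b -> colC a b = (a + b) / 2 * cp (a / (a + b)).
Proof.
  intros ha hbb. destruct (Req_dec (a + b) 0) as [e|ne].
  { assert (a = 0) by lra. assert (b = 0) by lra. subst. unfold colC, tC.
    destruct (Rlt_dec 0 0); [lra|]. lra. }
  set (t := a + b). assert (ht : 0 < t) by (unfold t; lra).
  set (p := a / t).
  assert (ea : a = t * p) by (unfold p; field; lra).
  assert (eb : b = t * (1 - p)) by (unfold p, t; field; lra).
  assert (hp : 0 <= p <= 1). { unfold p. split. apply Rdiv_le_0_compat; lra.
    apply (Rmult_le_reg_r t); auto. field_simplify; unfold t; lra. }
  unfold colC. replace (/ 2 * a + / 2 * b) with (t / 2) by (unfold t; field).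
  rewrite ea at 1. rewrite eb at 1. rewrite !tC_eq by lra.
  unfold cp, hb. clearbody t p. unfold Rdiv. ring.
Qed.

Lemma colF_nn rho a b : -1 < rho -> 0 <= a -> 0 <= b -> 0 <= a / (a+b) <= 1 \/ a + b = 0.
Proof.
  intros. destruct (Req_dec (a+b) 0); auto. left. split. apply Rdiv_le_0_compat; lra.
  apply (Rmult_le_reg_r (a+b)); [lra|]. field_simplify; lra.
Qed.

Lemma mass n W : is_channel n W -> sumR n (fun y => (W false y + W true y) / 2) = 1.
Proof.
  intros [hnn hs]. unfold Rdiv.
  replace (fun y => (W false y + W true y) * / 2) with (fun y => / 2 * W false y + / 2 * W true y)
    by (apply functional_extensionality; intro; ring).
  rewrite sumR_plus, !sumR_scal, !hs. field.
Qed.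

Section Dummy. End Dummy.

Lemma sum_upper rho n W al be : is_channel n W ->
  (forall y, (y < n)%nat -> colF rho (W false y) (W true y) <=
      al * ((W false y + W true y) / 2) + be * colC (W false y) (W true y)) ->
  gallagerF rho n W <= al + be * capacity n W.
Proof.
  intros hc h. rewrite gallagerF_col, capacity_col.
  replace (al + be * sumR n (fun y => colC (W false y) (W true y))) with
    (sumR n (fun y => al * ((W false y + W true y) / 2) + be * colC (W false y) (W true y))).
  apply sumR_le; auto.
  rewrite sumR_plus, !sumR_scal, (mass n W hc). ring.
Qed.

Lemma sum_lower rho n W al be : is_channel n W ->
  (forall y, (y < n)%nat -> al * ((W false y + W true y) / 2) + be * colC (W false y) (W true y)
      <= colF rho (W false y) (W true y)) ->
  al + be * capacity n W <= gallagerF rho n W.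
Proof.
  intros hc h. rewrite gallagerF_col, capacity_col.
  replace (al + be * sumR n (fun y => colC (W false y) (W true y))) with
    (sumR n (fun y => al * ((W false y + W true y) / 2) + be * colC (W false y) (W true y))).
  apply sumR_le; auto.
  rewrite sumR_plus, !sumR_scal, (mass n W hc). ring.
Qed.

Lemma col_cases a b : 0 <= a -> 0 <= b -> a + b = 0 \/ (0 < a + b /\ 0 <= a / (a + b) <= 1).
Proof.
  intros. destruct (Req_dec (a+b) 0); auto. right. split. lra. split. apply Rdiv_le_0_compat; lra.
  apply (Rmult_le_reg_r (a+b)); [lra|]. field_simplify; lra.
Qed.

Lemma cap_range n W : is_channel n W -> 0 <= capacity n W <= 1.
Proof.
  intro hc. destruct hc as [hnn hs].
  split.
  - rewrite capacity_col. apply sumR_nonneg. intros y _. rewrite colC_val by auto.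
    destruct (col_cases (W false y) (W true y)) as [e|[e1 e2]]; auto. rewrite e; lra.
    apply Rmult_le_pos. lra. apply cp_nonneg; auto.
  - rewrite <- (mass n W (conj hnn hs)). rewrite capacity_col. apply sumR_le. intros y _.
    rewrite colC_val by auto.
    destruct (col_cases (W false y) (W true y)) as [e|[e1 e2]]; auto. rewrite e; lra.
    pose proof (cp_le1 _ e2). assert (0 <= (W false y + W true y) / 2) by lra. nra.
Qed.

Lemma main_lower rho n W : -1 < rho -> is_channel n W ->
  Fbec rho (capacity n W) <= gallagerF rho n W.
Proof.
  intros hr hc. unfold Fbec. apply sum_lower; auto. intros y _.
  destruct hc as [hnn _].
  rewrite colC_val, colF_val by auto.
  destruct (col_cases (W false y) (W true y)) as [e|[e1 e2]]; auto. rewrite e; lra.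
  pose proof (chord_p rho _ hr e2). assert (0 <= (W false y + W true y) / 2) by lra.
  set (m := (W false y + W true y) / 2) in *. nra.
Qed.

Lemma hinv1 : hinv 1 = /2.
Proof. destruct (p0_spec 0) as [a b]; [lra|]. rewrite Rminus_0_r in *. apply cp_zero; auto; lra. Qed.

Lemma hinv0 : hinv 0 = 0.
Proof. destruct (p0_spec 1) as [a b]; [lra|]. rewrite Rminus_diag in a, b.
  destruct (cp_one (hinv 0)) as [h|h]; [lra|exact b|exact h|lra]. Qed.

Lemma main_upper rho n W : -1 < rho -> is_channel n W ->
  gallagerF rho n W <= Fbsc rho (capacity n W).
Proof.
  intros hr hc. pose proof (cap_range n W hc) as hC.
  set (C := capacity n W) in *.
  pose proof hc as [hnn hs].
  destruct (Req_dec C 0) as [e0|n0].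
  - (* all columns have cp = 0 *)
    rewrite e0, Fbsc_Gp, Rminus_0_r, hinv1, Gp_half by auto.
    assert (hz : forall y, (y < n)%nat -> colC (W false y) (W true y) = 0).
    { apply sumR_zero. intros y _. rewrite colC_val by auto.
      destruct (col_cases (W false y) (W true y)) as [e|[e1 e2]]; auto. rewrite e; lra.
      apply Rmult_le_pos. lra. apply cp_nonneg; auto.
      rewrite <- capacity_col. exact e0. }
    replace 1 with (1 + 0 * C) by ring. apply sum_upper; auto. intros y hy.
    specialize (hz y hy). rewrite colC_val in hz by auto. rewrite colF_val by auto.
    destruct (col_cases (W false y) (W true y)) as [e|[e1 e2]]; auto. rewrite e; lra.
    assert (cp (W false y / (W false y + W true y)) = 0).
    { apply Rmult_integral in hz. destruct hz; auto. lra. }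
    rewrite (cp_zero _ e2 H), Gp_half by auto. lra.
  - destruct (Req_dec C 1) as [e1|n1].
    + rewrite e1, Fbsc_Gp. replace (1 - 1) with 0 by ring. rewrite hinv0, Gp0.
      assert (hz : forall y, (y < n)%nat -> (W false y + W true y) / 2 - colC (W false y) (W true y) = 0).
      { apply sumR_zero. intros y _. rewrite colC_val by auto.
        destruct (col_cases (W false y) (W true y)) as [e|[e2 e3]]; auto. rewrite e; lra.
        pose proof (cp_le1 _ e3). assert (0 <= (W false y + W true y) / 2) by lra.
        set (m := (W false y + W true y) / 2) in *. nra.
        unfold Rminus. rewrite sumR_plus. rewrite (mass n W hc).
        replace (fun y => - colC (W false y) (W true y)) with (fun y => -1 * colC (W false y) (W true y))
          by (apply functional_extensionality; intro; ring).
        rewrite sumR_scal, <- capacity_col. fold C. lra. }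
      replace (Rpower 2 (- rho)) with (Rpower 2 (-rho) + 0 * C) by ring. apply sum_upper; auto. intros y hy.
      specialize (hz y hy). rewrite colC_val in hz by auto. rewrite colF_val by auto.
      destruct (col_cases (W false y) (W true y)) as [e|[e2 e3]]; auto. rewrite e; lra.
      assert (cp (W false y / (W false y + W true y)) = 1).
      { set (m := (W false y + W true y) / 2) in *. assert (0 < m) by (unfold m; lra).
        apply (Rmult_eq_reg_l m); lra. }
      destruct (cp_one _ e3 H) as [h|h]; rewrite h.
      * rewrite Gp0. lra.
      * replace 1 with (1 - 0) by ring. rewrite Gp_sym, Gp0. lra.
    + destruct (p0_spec C hC) as [hp0 hcp0].
      set (p0 := hinv (1 - C)) in *.
      assert (p0 <> 0) by (intro e; rewrite e, cp0 in hcp0; lra).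
      assert (p0 <> /2) by (intro e; rewrite e, cp_half in hcp0; lra).
      destruct (tangent_p rho p0 hr ltac:(lra)) as [lam hlam].
      rewrite Fbsc_Gp. fold p0.
      replace (Gp rho p0) with ((Gp rho p0 - lam * C) + lam * C) by ring.
      apply sum_upper; auto. intros y hy.
      rewrite colC_val, colF_val by auto.
      destruct (col_cases (W false y) (W true y)) as [e|[e2 e3]]; auto. rewrite e; lra.
      pose proof (hlam _ e3). rewrite hcp0 in H1.
      assert (0 <= (W false y + W true y) / 2) by lra.
      set (m := (W false y + W true y) / 2) in *. set (q := W false y / (W false y + W true y)) in *.
      nra.
Qed.

Lemma cp_strict q1 q2 : 0 <= q1 < q2 -> q2 <= /2 -> cp q2 < cp q1.
Proof.
  intros h1 h2. destruct (Req_dec q1 0) as [->|n].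
  { rewrite cp0. apply cp_lt1; lra. }
  rewrite !cp_q by lra. apply cx_strict. split.
  destruct (xq_spec q2) as [a b]; lra. apply xq_lt; lra.
Qed.

Lemma hinv_cp p : 0 <= p <= /2 -> hinv (1 - cp p) = p.
Proof.
  intro hp. assert (hc : 0 <= cp p <= 1) by (split; [apply cp_nonneg|apply cp_le1]; lra).
  destruct (p0_spec (cp p) hc) as [a b]. set (p' := hinv (1 - cp p)) in *.
  destruct (Rtotal_order p' p) as [l|[e|g]]; auto.
  - pose proof (cp_strict p' p ltac:(lra) ltac:(lra)). lra.
  - pose proof (cp_strict p p' ltac:(lra) ltac:(lra)). lra.
Qed.

Lemma Fbsc_cp rho p : 0 <= p <= /2 -> Fbsc rho (cp p) = Gp rho p.
Proof. intro h. rewrite Fbsc_Gp, hinv_cp; auto. Qed.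

Lemma Gp_range rho p : -1 < rho -> 0 <= p <= /2 ->
  (0 < rho -> Gp rho 0 <= Gp rho p <= Gp rho (/2)) /\ (rho < 0 -> Gp rho (/2) <= Gp rho p <= Gp rho 0).
Proof.
  intros hr hp. split; intro hs.
  - split.
    + destruct (Req_dec p 0) as [->|n]; [lra|]. left; apply (Gp_strict rho 0 p hr); lra.
    + destruct (Req_dec p (/2)) as [->|n]; [lra|]. left; apply (Gp_strict rho p (/2) hr); lra.
  - split.
    + destruct (Req_dec p (/2)) as [->|n]; [lra|]. left; apply (Gp_strict rho p (/2) hr); lra.
    + destruct (Req_dec p 0) as [->|n]; [lra|]. left; apply (Gp_strict rho 0 p hr); lra.
Qed.

Lemma k_sign rho : (0 < rho -> Rpower 2 (-rho) < 1) /\ (rho < 0 -> 1 < Rpower 2 (-rho)).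
Proof.
  split; intro h.
  - rewrite <- (Rpower_O 2) by lra. apply Rpower_lt; lra.
  - rewrite <- (Rpower_O 2) at 1 by lra. apply Rpower_lt; lra.
Qed.

Lemma main_inv rho n W : -1 < rho -> is_channel n W ->
  (rho < 0 -> Cbsc rho (gallagerF rho n W) <= capacity n W <= Cbec rho (gallagerF rho n W)) /\
  (0 < rho -> Cbec rho (gallagerF rho n W) <= capacity n W <= Cbsc rho (gallagerF rho n W)).
Proof.
  intros hr hc.
  pose proof (cap_range n W hc) as hC. pose proof (main_lower rho n W hr hc) as hlo.
  pose proof (main_upper rho n W hr hc) as hup.
  set (C := capacity n W) in *. set (F := gallagerF rho n W) in *.
  destruct (p0_spec C hC) as [hpC hcpC]. set (pC := hinv (1 - C)) in *.
  rewrite Fbsc_Gp in hup. fold pC in hup.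
  destruct (Gp_range rho pC hr hpC) as [gr1 gr2].
  pose proof (k_sign rho) as [k1 k2].
  rewrite Gp0, Gp_half in gr1, gr2 by auto.
  unfold Fbec in hlo.
  assert (exbsc : (0 < rho -> Rpower 2 (-rho) <= F <= 1) -> (rho < 0 -> 1 <= F <= Rpower 2 (-rho)) ->
                  rho <> 0 -> 0 <= Cbsc rho F <= 1 /\ Fbsc rho (Cbsc rho F) = F).
  { intros r1 r2 r0. unfold Cbsc. apply epsilon_spec.
    destruct (IVT_gen (Gp rho) 0 (/2) F) as [p [hp ep]].
    - intro x. apply Gp_cont; auto.
    - rewrite Gp0, Gp_half by auto. destruct (Rlt_dec 0 rho).
      + rewrite Rmin_left, Rmax_right by (specialize (k1 r); lra). apply r1; auto.
      + rewrite Rmin_right, Rmax_left by (assert (rho < 0) by lra; specialize (k2 H); lra). apply r2; lra.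
    - rewrite Rmin_left, Rmax_right in hp by lra.
      exists (cp p). split. split; [apply cp_nonneg|apply cp_le1]; lra.
      rewrite Fbsc_cp by lra. auto. }
  assert (exbec : rho <> 0 -> (0 <= (F - 1) / (Rpower 2 (-rho) - 1) <= 1) ->
                  0 <= Cbec rho F <= 1 /\ Fbec rho (Cbec rho F) = F).
  { intros r0 hin. unfold Cbec. apply epsilon_spec. exists ((F - 1) / (Rpower 2 (-rho) - 1)).
    split; auto. unfold Fbec. field.
    destruct (Rlt_dec 0 rho). specialize (k1 r); lra. assert (rho < 0) by lra. specialize (k2 H); lra. }
  split; intro hs.
  - specialize (k2 hs). specialize (gr2 hs).
    assert (hF : 1 <= F <= Rpower 2 (-rho)).
    { split. assert (0 <= (Rpower 2 (-rho) - 1) * C) by (apply Rmult_le_pos; lra). lra. lra. }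
    destruct (exbsc ltac:(lra) ltac:(auto) ltac:(lra)) as [b1 b2].
    destruct (exbec ltac:(lra)) as [c1 c2].
    { split. apply Rdiv_le_0_compat; lra. apply (Rmult_le_reg_r (Rpower 2 (-rho) - 1)); [lra|].
      field_simplify; lra. }
    split.
    +
      set (c := Cbsc rho F) in *. destruct (Rle_dec c C) as [r|r]; auto. exfalso.
      destruct (p0_spec c b1) as [hp hcp]. set (p := hinv (1 - c)) in *.
      rewrite Fbsc_Gp in b2. fold p in b2.
      assert (p < pC). { destruct (Rlt_dec p pC); auto. assert (cp p <= cp pC) by (apply cp_anti; lra). lra. }
      assert (Gp rho pC < Gp rho p) by (apply (Gp_strict rho p pC hr); lra). lra.
    + set (c := Cbec rho F) in *. unfold Fbec in c2.
      assert ((Rpower 2 (- rho) - 1) * C <= (Rpower 2 (- rho) - 1) * c) by lra.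
      apply (Rmult_le_reg_l (Rpower 2 (- rho) - 1)); lra.
  - specialize (k1 hs). specialize (gr1 hs).
    assert (hF : Rpower 2 (-rho) <= F <= 1).
    { split. assert ((Rpower 2 (-rho) - 1) * C >= (Rpower 2 (-rho) - 1) * 1) by nra. lra. lra. }
    destruct (exbsc ltac:(auto) ltac:(lra) ltac:(lra)) as [b1 b2].
    destruct (exbec ltac:(lra)) as [c1 c2].
    { replace ((F - 1) / (Rpower 2 (-rho) - 1)) with ((1 - F) / (1 - Rpower 2 (-rho))) by (field; lra).
      split. apply Rdiv_le_0_compat; lra. apply (Rmult_le_reg_r (1 - Rpower 2 (-rho))); [lra|].
      field_simplify; lra. }
    split.
    + set (c := Cbec rho F) in *. unfold Fbec in c2.
      assert ((Rpower 2 (- rho) - 1) * C <= (Rpower 2 (- rho) - 1) * c) by lra.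
      assert (0 < 1 - Rpower 2 (-rho)) by lra.
      assert ((1 - Rpower 2 (- rho)) * c <= (1 - Rpower 2 (- rho)) * C) by lra.
      apply (Rmult_le_reg_l (1 - Rpower 2 (- rho))); lra.
    + set (c := Cbsc rho F) in *. destruct (Rle_dec C c) as [r|r]; auto. exfalso.
      destruct (p0_spec c b1) as [hp hcp]. set (p := hinv (1 - c)) in *.
      rewrite Fbsc_Gp in b2. fold p in b2.
      assert (pC < p). { destruct (Rlt_dec pC p); auto. assert (cp pC <= cp p) by (apply cp_anti; lra). lra. }
      assert (Gp rho pC < Gp rho p) by (apply (Gp_strict rho pC p hr); lra). lra.
Qed.

Definition mixW (w q : R) (x : bool) (y : nat) : R :=
  match y with
  | 0%nat => if x then w * q else w * (1 - q)
  | 1%nat => if x then w * (1 - q) else w * q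
  | 2%nat => 1 - w
  | _ => 0
  end.

Lemma sumR3 f : sumR 3 f = f 0%nat + f 1%nat + f 2%nat.
Proof. unfold sumR. simpl. ring. Qed.
Lemma sumR2 f : sumR 2 f = f 0%nat + f 1%nat.
Proof. unfold sumR. simpl. ring. Qed.

Lemma colC_wq w q : 0 <= w -> 0 <= q <= 1 -> colC (w * q) (w * (1 - q)) = w / 2 * cp q.
Proof.
  intros hw hq. rewrite colC_val by nra. destruct (Req_dec w 0) as [->|n].
  { lra. }
  replace (w * q + w * (1 - q)) with w by ring. replace (w * q / w) with q by (field; lra). reflexivity.
Qed.

Lemma colF_wq rho w q : -1 < rho -> 0 <= w -> 0 <= q <= 1 -> colF rho (w * q) (w * (1 - q)) = w / 2 * Gp rho q.
Proof.
  intros hr hw hq. rewrite colF_val by (auto; nra). destruct (Req_dec w 0) as [->|n].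
  { lra. }
  replace (w * q + w * (1 - q)) with w by ring. replace (w * q / w) with q by (field; lra). reflexivity.
Qed.

Lemma colC_wq' w q : 0 <= w -> 0 <= q <= 1 -> colC (w * (1 - q)) (w * q) = w / 2 * cp q.
Proof. intros hw hq. pose proof (colC_wq w (1-q) hw ltac:(lra)). replace (1 - (1 - q)) with q in H by ring.
  rewrite H, cp_sym. auto. Qed.

Lemma colF_wq' rho w q : -1 < rho -> 0 <= w -> 0 <= q <= 1 -> colF rho (w * (1 - q)) (w * q) = w / 2 * Gp rho q.
Proof. intros hr hw hq. pose proof (colF_wq rho w (1-q) hr hw ltac:(lra)). replace (1 - (1 - q)) with q in H by ring.
  rewrite H, Gp_sym. auto. Qed.

Lemma colC_tt t : 0 <= t -> colC t t = 0.
Proof.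
  intro h. rewrite colC_val by auto. destruct (Req_dec t 0) as [->|n]. lra.
  replace (t / (t + t)) with (/2) by (field; lra). rewrite cp_half. ring.
Qed.

Lemma colF_tt rho t : -1 < rho -> 0 <= t -> colF rho t t = t.
Proof.
  intros hr h. rewrite colF_val by auto. destruct (Req_dec t 0) as [->|n]. lra.
  replace (t / (t + t)) with (/2) by (field; lra). rewrite Gp_half by auto. field.
Qed.

Lemma mix_cap w q : 0 <= w <= 1 -> 0 <= q <= 1 -> capacity 3 (mixW w q) = w * cp q.
Proof.
  intros hw hq. rewrite capacity_col, sumR3. simpl.
  rewrite colC_wq by lra. rewrite colC_wq' by lra. rewrite colC_tt by lra. field.
Qed.

Lemma mix_F rho w q : -1 < rho -> 0 <= w <= 1 -> 0 <= q <= 1 ->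
  gallagerF rho 3 (mixW w q) = w * Gp rho q + (1 - w).
Proof.
  intros hr hw hq. rewrite gallagerF_col, sumR3. simpl.
  rewrite colF_wq by lra. rewrite colF_wq' by lra. rewrite colF_tt by lra. field.
Qed.

Lemma mix_bims w q : 0 <= w <= 1 -> 0 <= q <= 1 -> is_bims 3 (mixW w q).
Proof.
  intros hw hq. split. split.
  - intros x y. destruct x, y as [|[|[|y]]]; simpl; nra.
  - intro x. rewrite sumR3. destruct x; simpl; ring.
  - exists (fun y => if Nat.eqb y 2 then 1%nat else 0%nat). split.
    + intro k. destruct k as [|[|k]]; unfold block; simpl.
      * apply perm_swap.
      * apply Permutation_refl.
      * apply Permutation_refl.
    + intros y y' hy hy' hp.
      destruct y as [|[|[|y]]]; try lia; destruct y' as [|[|[|y']]]; try lia; simpl in *; try discriminate;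
        first [left; split; reflexivity | right; split; reflexivity].
Qed.

Lemma bec_mix C : bec C = mixW C 0.
Proof.
  apply functional_extensionality; intro x; apply functional_extensionality; intro y.
  destruct x, y as [|[|[|y]]]; simpl; ring.
Qed.

Lemma bsc_facts rho C : -1 < rho -> 0 <= C <= 1 ->
  is_bims 2 (bsc C) /\ capacity 2 (bsc C) = C /\ gallagerF rho 2 (bsc C) = Fbsc rho C.
Proof.
  intros hr hC. destruct (p0_spec C hC) as [he hce].
  set (e := hinv (1 - C)) in *.
  assert (hbf : forall y, bsc C false y = match y with 0%nat => 1 * (1 - e) | 1%nat => 1 * e | _ => 0 end).
  { intros [|[|y]]; unfold bsc; fold e; simpl; ring. }
  assert (hbt : forall y, bsc C true y = match y with 0%nat => 1 * e | 1%nat => 1 * (1 - e) | _ => 0 end).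
  { intros [|[|y]]; unfold bsc; fold e; simpl; ring. }
  split; [|split].
  - split. split.
    + intros x y. destruct x; [rewrite hbt|rewrite hbf]; destruct y as [|[|y]]; lra.
    + intro x. rewrite sumR2. destruct x; [rewrite !hbt|rewrite !hbf]; ring.
    + exists (fun _ => 0%nat). split.
      * intro k. destruct k as [|k]; unfold block; simpl.
        -- apply perm_swap.
        -- apply Permutation_refl.
      * intros y y' hy hy' _. unfold bsc.
        destruct y as [|[|y]]; try lia; destruct y' as [|[|y']]; try lia;
          first [left; split; reflexivity | right; split; reflexivity].
  - rewrite capacity_col, sumR2. rewrite !hbf, !hbt.
    rewrite colC_wq' by lra. rewrite colC_wq by lra. rewrite hce. field.
  - rewrite gallagerF_col, sumR2. rewrite !hbf, !hbt.
    rewrite colF_wq' by lra. rewrite colF_wq by lra. rewrite Fbsc_Gp. fold e. field.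
Qed.

Lemma bec_facts rho C : -1 < rho -> 0 <= C <= 1 ->
  is_bims 3 (bec C) /\ capacity 3 (bec C) = C /\ gallagerF rho 3 (bec C) = Fbec rho C.
Proof.
  intros hr hC. rewrite bec_mix. split; [|split].
  - apply mix_bims; lra.
  - rewrite mix_cap by lra. rewrite cp0. ring.
  - rewrite mix_F by lra. rewrite Gp0. unfold Fbec. ring.
Qed.

Definition clamp b q := Rmax 0 (Rmin q b).

Lemma min_lip b x y : Rabs (Rmin y b - Rmin x b) <= Rabs (y - x).
Proof.
  unfold Rmin. destruct (Rle_dec y b), (Rle_dec x b);
  unfold Rabs; destruct (Rcase_abs (y - x)); repeat match goal with |- context [Rcase_abs ?a] => destruct (Rcase_abs a) end; lra.
Qed.

Lemma max_lip u v : Rabs (Rmax 0 u - Rmax 0 v) <= Rabs (u - v).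
Proof.
  unfold Rmax. destruct (Rle_dec 0 u), (Rle_dec 0 v);
  unfold Rabs; destruct (Rcase_abs (u - v)); repeat match goal with |- context [Rcase_abs ?a] => destruct (Rcase_abs a) end; lra.
Qed.

Lemma clamp_lip b x y : 0 <= b -> Rabs (clamp b y - clamp b x) <= Rabs (y - x).
Proof.
  intro hb. unfold clamp. eapply Rle_trans. apply max_lip. apply min_lip.
Qed.

Lemma clamp_cont b x : 0 <= b -> continuity_pt (clamp b) x.
Proof.
  intro hb. apply cont_eps. intros e he. exists e. split; auto.
  intros y hy. pose proof (clamp_lip b x y hb). lra.
Qed.

Lemma clamp_range b x : 0 <= b -> 0 <= clamp b x <= b.
Proof. intro hb. unfold clamp, Rmax, Rmin. repeat destruct Rle_dec; lra. Qed.

Lemma clamp_id b x : 0 <= x <= b -> clamp b x = x.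
Proof. intro h. unfold clamp, Rmax, Rmin. repeat destruct Rle_dec; lra. Qed.

Lemma exist_pair rho C t : -1 < rho -> 0 <= C <= 1 -> Fbec rho C <= t <= Fbsc rho C ->
  exists (n : nat) (W : bool -> nat -> R), is_bims n W /\ capacity n W = C /\ gallagerF rho n W = t.
Proof.
  intros hr hC ht.
  destruct (Req_dec C 0) as [e0|n0].
  - subst C. rewrite Fbsc_Gp, Rminus_0_r, hinv1, Gp_half in ht by auto.
    unfold Fbec in ht. assert (t = 1) by lra. subst t.
    exists 3%nat, (bec 0). destruct (bec_facts rho 0 hr hC) as [a [b c]]. split; auto. split; auto.
    rewrite c. unfold Fbec. ring.
  - destruct (p0_spec C hC) as [hp hcp]. set (pC := hinv (1 - C)) in *.
    assert (pC <> /2) by (intro e; rewrite e, cp_half in hcp; lra).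
    set (phi := fun q => 1 + C * (Gp rho q - 1) / cp q).
    assert (hcpos : forall q, 0 <= q <= pC -> C <= cp q).
    { intros q hq. rewrite <- hcp. apply cp_anti; lra. }
    set (g := fun q => phi (clamp pC q)).
    assert (hg : continuity g).
    { intro q. unfold g. apply (continuity_pt_comp (clamp pC) phi). apply clamp_cont; lra.
      pose proof (clamp_range pC q ltac:(lra)) as hr'.
      pose proof (hcpos _ hr').
      unfold phi. apply (continuity_pt_plus (fun _ => 1) (fun q => C * (Gp rho q - 1) / cp q)).
      apply continuity_pt_const; intros u v; reflexivity.
      apply (continuity_pt_div (fun q => C * (Gp rho q - 1)) cp).
      apply (continuity_pt_mult (fun _ => C) (fun q => Gp rho q - 1)).
      apply continuity_pt_const; intros u v; reflexivity.
      apply (continuity_pt_minus (Gp rho) (fun _ => 1)). apply Gp_cont; auto.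
      apply continuity_pt_const; intros u v; reflexivity.
      apply cp_cont. lra. }
    assert (g0 : g 0 = Fbec rho C).
    { unfold g. rewrite clamp_id by lra. unfold phi. rewrite Gp0, cp0. unfold Fbec. field. }
    assert (gC : g pC = Fbsc rho C).
    { unfold g. rewrite clamp_id by lra. unfold phi. rewrite hcp, Fbsc_Gp. fold pC. field. lra. }
    destruct (IVT_gen g 0 pC t hg) as [q0 [hq0 eq0]].
    { rewrite g0, gC. split. apply (Rle_trans _ (Fbec rho C)); [apply Rmin_l|lra].
      apply (Rle_trans _ (Fbsc rho C)); [lra|apply Rmax_r]. }
    rewrite Rmin_left, Rmax_right in hq0 by lra.
    unfold g in eq0. rewrite clamp_id in eq0 by lra. unfold phi in eq0.
    pose proof (hcpos q0 hq0) as hc0.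
    set (w := C / cp q0).
    assert (hw : 0 <= w <= 1).
    { unfold w. split. apply Rdiv_le_0_compat; lra. apply (Rmult_le_reg_r (cp q0)); [lra|].
      field_simplify; lra. }
    exists 3%nat, (mixW w q0). split; [apply mix_bims; lra|]. split.
    + rewrite mix_cap by lra. unfold w. field. lra.
    + rewrite mix_F by lra. rewrite <- eq0. unfold w. field. lra.
Qed.

Theorem theorem1 (rho : R) (hrho : -1 < rho) :
  (forall (n : nat) (W : bool -> nat -> R), is_bims n W ->
     Fbec rho (capacity n W) <= gallagerF rho n W <= Fbsc rho (capacity n W) /\
     (rho < 0 ->
        Cbsc rho (gallagerF rho n W) <= capacity n W <= Cbec rho (gallagerF rho n W)) /\
     (0 < rho ->
        Cbec rho (gallagerF rho n W) <= capacity n W <= Cbsc rho (gallagerF rho n W))) /\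
  (forall C : R, 0 <= C <= 1 ->
     (is_bims 3 (bec C) /\ capacity 3 (bec C) = C /\
      gallagerF rho 3 (bec C) = Fbec rho C) /\
     (is_bims 2 (bsc C) /\ capacity 2 (bsc C) = C /\
      gallagerF rho 2 (bsc C) = Fbsc rho C)) /\
  (forall C t : R, 0 <= C <= 1 -> Fbec rho C <= t <= Fbsc rho C ->
     exists (n : nat) (W : bool -> nat -> R),
       is_bims n W /\ capacity n W = C /\ gallagerF rho n W = t) /\
  (forall C t : R, 0 <= C <= 1 -> ~ (Fbec rho C <= t <= Fbsc rho C) ->
     ~ exists (n : nat) (W : bool -> nat -> R),
       is_bims n W /\ capacity n W = C /\ gallagerF rho n W = t).
Proof.
  split; [|split; [|split]].
  - intros n W [hc _]. split; [split|].
    + apply main_lower; auto.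
    + apply main_upper; auto.
    + apply main_inv; auto.
  - intros C hC. split. apply bec_facts; auto. apply bsc_facts; auto.
  - intros C t hC ht. apply exist_pair; auto.
  - intros C t hC hn [n [W [[hc _] [e1 e2]]]]. apply hn. rewrite <- e1, <- e2. split.
    apply main_lower; auto. apply main_upper; auto.
Qed.
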